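(* Let $p\ge3$ be a prime, let $U$ be the probability distribution on $\mathbb{F}_p$ that assigns probability $1/2$ to each of $0$ and $1$, and let $D$ be a probability distribution on $\mathbb{F}_p$ such that $|D(x)-p^{-1}|\le p^{-2}$ for each $x\in\mathbb{F}_p$. Then there exists a probability distribution $E$ on $\mathbb{F}_p$ such that $D=U+E$.
   Context: For probability distributions $D',D''$ on a finite abelian group $G$, $D'+D''$ denotes their convolution: $(D'+D'')(x)=\sum_{y+z=x}D'(y)D''(z)$, i.e. the distribution of the sum of independent random variables with distributions $D'$ and $D''$. *)

(* Defs.v *)
From mathcomp Require Import all_boot all_order all_algebra.
Set Implicit Arguments. Unset Strict Implicit. Unset Printing Implicit Defensive.
Import Order.TTheory GRing.Theory Num.Theory.
Local Open Scope ring_scope.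

Definition is_distr (R : realFieldType) (G : finZmodType) (D : {ffun G -> R}) : Prop :=
  (forall x, 0 <= D x) /\ \sum_(x : G) D x = 1.

(* Convolution: (D1 + D2)(x) = sum_{y+z=x} D1 y D2 z. *)
Definition conv (R : realFieldType) (G : finZmodType) (D1 D2 : {ffun G -> R})
  : {ffun G -> R} :=
  [ffun x => \sum_(y : G) \sum_(z : G | y + z == x) D1 y * D2 z].

Definition Uhalf (R : realFieldType) (p : nat) : {ffun 'F_p -> R} :=
  [ffun x => if (x == 0) || (x == 1) then 2^-1 else 0].

(* Main.v *)
Require Import Defs.
From mathcomp Require Import all_boot all_order all_algebra.
From mathcomp Require Import lra.
Import Order.TTheory GRing.Theory Num.Theory.
Local Open Scope ring_scope.

Lemma sum_sign (R : realFieldType) (n : nat) :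
  \sum_(k < n) ((-1) ^+ k : R) = (odd n)%:R.
Proof.
elim: n => [|n IH]; first by rewrite big_ord0.
rewrite big_ord_recr /= IH -signr_odd.
by case: (odd n) => /=; rewrite ?expr1 ?expr0 ?subrr ?add0r.
Qed.

Lemma sum_shift {R : realFieldType} {G : finZmodType} (f : G -> R) (c : G) :
  \sum_(x : G) f (x - c) = \sum_(x : G) f x.
Proof.
by rewrite [RHS](reindex_inj (addIr (- c))).
Qed.

Lemma alt_sum {R : realFieldType} {G : pzRingType} (f : G -> R) (x : G) {n : nat}
  (hn : (n%:R : G) = 0) (hodd : odd n) :
  \sum_(k < n) (-1) ^+ k * f (x - k%:R) + \sum_(k < n) (-1) ^+ k * f (x - 1 - k%:R)
  = 2 * f x.
Proof.
case: n hn hodd => // n pchar podd.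
rewrite big_ord_recl big_ord_recr /= expr0 mul1r subr0.
have nev : (-1) ^+ n = (1 : R) by rewrite -signr_odd; move: podd => /= /negPf ->.
rewrite nev mul1r.
have -> : x - 1 - n%:R = x.
  by rewrite -addrA -opprD [1 + _]addrC natr1 pchar oppr0 addr0.
rewrite -addrA [_ + (_ + f x)]addrA -big_split /= big1 ?add0r; first lra.
move=> i _; rewrite /bump /= add1n exprS mulN1r mulNr.
by rewrite -natr1 [_%:R + 1]addrC opprD addrA addNr.
Qed.

Theorem lemma3p2 (R : realFieldType) (p : nat) (hp : prime p) (hp3 : (3 <= p)%N)
  (D : {ffun 'F_p -> R}) (hD : is_distr D)
  (hclose : forall x : 'F_p, `|D x - (p%:R)^-1| <= (p%:R ^+ 2)^-1) :
  exists E : {ffun 'F_p -> R}, is_distr E /\ D = conv (Uhalf R p) E.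
Proof.
have podd : odd p.
  by case: (even_prime hp) => // e2; rewrite e2 in hp3.
have pchar : (p%:R : 'F_p) = 0 by apply: pcharf0; apply: pchar_Fp.
case: hD => D0 D1.
set E := [ffun x : 'F_p => \sum_(k < p) (-1) ^+ k * D (x - k%:R)].
exists E; split; [split|].
- move=> x; rewrite ffunE.
  have -> : \sum_(k < p) (-1) ^+ k * D (x - k%:R) =
    \sum_(k < p) (-1) ^+ k * (p%:R : R)^-1 +
    \sum_(k < p) (-1) ^+ k * (D (x - k%:R) - (p%:R)^-1).
    by rewrite -big_split /=; apply: eq_bigr => k _; rewrite -mulrDr addrCA subrr addr0.
  rewrite -mulr_suml sum_sign podd mul1r.
  have pp : (0 : R) < p%:R by rewrite ltr0n prime_gt0.
  have : `|\sum_(k < p) (-1) ^+ k * (D (x - k%:R) - (p%:R)^-1)| <= (p%:R : R)^-1.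
    apply: (le_trans (ler_norm_sum _ _ _)).
    apply: (@le_trans _ _ (\sum_(k < p) (p%:R ^+ 2 : R)^-1)).
      apply: ler_sum => k _; rewrite normrM normrX normrN1 expr1n mul1r; exact: hclose.
    rewrite sumr_const card_ord -[_ *+ p]mulr_natr expr2 invfM -mulrA mulVf ?mulr1 //.
    by rewrite gt_eqF.
  rewrite ler_norml => /andP[h _].
  lra.
- rewrite (eq_bigr (fun x => \sum_(k < p) (-1) ^+ k * D (x - k%:R))); last by move=> x _; rewrite ffunE.
  rewrite exchange_big /=.
  rewrite (eq_bigr (fun k : 'I_p => (-1) ^+ k)); first by rewrite sum_sign podd.
  move=> k _; rewrite -mulr_sumr.
  by rewrite (sum_shift (fun y => D y)) D1 mulr1.
- apply/ffunP => x; rewrite /conv ffunE.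
  rewrite (eq_bigr (fun y => Uhalf R p y * E (x - y))); last first.
    move=> y _; rewrite (big_pred1 (x - y)) // => z /=.
    by rewrite [RHS]eq_sym subr_eq eq_sym addrC.
  rewrite (bigD1 (0 : 'F_p)) //= (bigD1 (1 : 'F_p)) //= big1; last first.
    by move=> y /andP[ny1 ny0]; rewrite ffunE (negPf ny1) (negPf ny0) mul0r.
  rewrite !ffunE eqxx /=.
  rewrite addr0 subr0 -mulrDr (alt_sum (fun y => D y) x pchar podd).
  by rewrite mulrA mulVf ?mul1r // pnatr_eq0.
Qed.
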